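(* Let $(H,\mathcal P)$ be a hypergraph colouring instance with pinnings, $H=(V,\mathcal E)$ with maximum degree $\Delta$, and let $k'\le k$ be integers with $k'\ge 2$ such that $k'\le|e|\le k$ for every $e\in\mathcal E$. Let $t\ge k$ and $q\ge(\mathrm e t\Delta)^{\frac{1}{k'-1}}$. Then for every $v\in V$ and every colour $c\in[q]$, $$\Pr_{\sigma\sim\mu_{\mathcal C}}[\sigma(v)=c]\le\frac1q\Big(1+\frac4t\Big).$$
   Context: A hypergraph $H=(V,\mathcal E)$ has finite vertex set $V$ and hyperedges $\mathcal E\subseteq 2^V$; its maximum degree $\Delta$ is the maximum number of hyperedges containing a single vertex. For $q\in\mathbb N$, a hypergraph colouring instance with pinnings is a pair $(H,\mathcal P)$ with $\mathcal P=\{P_e\subseteq[q]:e\in\mathcal E\}$ ($P_e$ is the set of colours already present in $e$). A colouring $\sigma\in[q]^V$ is proper if $|\{\sigma(u):u\in e\}\cup P_e|>1$ for every $e\in\mathcal E$. $\mathcal C$ is the set of proper colourings and $\mu_{\mathcal C}$ the uniform distribution on $\mathcal C$. $\mathrm e$ denotes Euler's number. *)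

(* Defs.v *)
From mathcomp Require Import all_boot all_order all_algebra.
From mathcomp Require Import all_classical all_reals all_analysis.
Set Implicit Arguments. Unset Strict Implicit. Unset Printing Implicit Defensive.
Import Order.TTheory GRing.Theory Num.Theory.

(* Hypergraph H = (V, E): V a finType, E : {set {set V}}.
   Colours [q] = 'I_q.  Pinnings P : {set V} -> {set 'I_q} (P e = P_e). *)

Definition hdeg (V : finType) (E : {set {set V}}) (v : V) : nat :=
  #|[set e in E | v \in e]|.
Definition maxdeg (V : finType) (E : {set {set V}}) : nat :=
  \max_(v : V) hdeg E v.

Definition proper_col (V : finType) (q : nat) (E : {set {set V}})
    (P : {set V} -> {set 'I_q}) (sigma : {ffun V -> 'I_q}) : bool :=
  [forall e in E, 1 < #|(sigma @: e) :|: P e|].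

Definition proper_cols (V : finType) (q : nat) (E : {set {set V}})
    (P : {set V} -> {set 'I_q}) : {set {ffun V -> 'I_q}} :=
  [set sigma | proper_col E P sigma].

Definition marg_prob (R : realType) (V : finType) (q : nat) (E : {set {set V}})
    (P : {set V} -> {set 'I_q}) (v : V) (c : 'I_q) : R :=
  (#|[set sigma in proper_cols E P | sigma v == c]|%:R
     / #|proper_cols E P|%:R)%R.

(* Main.v *)
Require Import Defs.
From mathcomp Require Import all_boot all_order all_algebra.
From mathcomp Require Import all_classical all_reals all_analysis.
Import Order.TTheory GRing.Theory Num.Theory.
Set Implicit Arguments. Unset Strict Implicit. Unset Printing Implicit Defensive.

Definition mixf (V : finType) (q : nat) (D : {set V}) (s t : {ffun V -> 'I_q}) :
  {ffun V -> 'I_q} := [ffun u => if u \in D then s u else t u].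

Lemma indep (V : finType) (q : nat) (D : {set V}) (A B : {set {ffun V -> 'I_q}}) :
  (forall s t : {ffun V -> 'I_q}, (forall u, u \in D -> s u = t u) -> (s \in A) = (t \in A)) ->
  (forall s t : {ffun V -> 'I_q}, (forall u, u \notin D -> s u = t u) -> (s \in B) = (t \in B)) ->
  (#|A :&: B| * #|{ffun V -> 'I_q}| = #|A| * #|B|)%N.
Proof.
move=> hA hB.
pose f (p : {ffun V -> 'I_q} * {ffun V -> 'I_q}) := (mixf D p.1 p.2, mixf D p.2 p.1).
have fK : involutive f.
  case=> s t; rewrite /f /=; congr pair; apply/ffunP => u; rewrite !ffunE;
  by case: (u \in D).
have finj : injective f := inv_inj fK.
rewrite -cardsT -!cardsX.
have h1 : f @: finset.setX A B \subset finset.setX (A :&: B) [set: {ffun V -> 'I_q}]%SET.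
  apply/fintype.subsetP => _ /imsetP[[s t] /finset.setXP[sA tB] ->].
  rewrite /f /= !inE andbT; apply/andP; split.
    by rewrite (hA _ s) // => u uD; rewrite ffunE uD.
  by rewrite (hB _ t) // => u uD; rewrite ffunE (negbTE uD).
have h2 : f @: finset.setX (A :&: B) [set: {ffun V -> 'I_q}]%SET \subset finset.setX A B.
  apply/fintype.subsetP => _ /imsetP[[s t] /finset.setXP[/setIP[sA sB] _] ->].
  rewrite /f /= !inE; apply/andP; split.
    by rewrite (hA _ s) // => u uD; rewrite ffunE uD.
  by rewrite (hB _ s) // => u uD; rewrite ffunE (negbTE uD).
apply/eqP; rewrite eqn_leq.
have := subset_leq_card h1; rewrite card_imset // => ->.
by have := subset_leq_card h2; rewrite card_imset // => ->.
Qed.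

Lemma card_fix (V : finType) (q : nat) (D : {set V}) (g : V -> 'I_q) :
  (#|[set s : {ffun V -> 'I_q} | [forall u in D, s u == g u]]| * q ^ #|D| = q ^ #|V|)%N.
Proof.
pose F := fun u : V => if u \in D then pred1 (g u) else predT.
have -> : [set s : {ffun V -> 'I_q} | [forall u in D, s u == g u]] = [set s in family F].
  apply/setP => s; rewrite !inE; apply/forall_inP/familyP => h u.
    rewrite /F; case: ifP => uD; last by [].
    by rewrite inE h.
  by move=> uD; have := h u; rewrite /F uD inE.
rewrite cardsE card_family.
rewrite foldrE big_image /=.
rewrite (bigID (fun u => u \in D)) /=.
rewrite big1 ?mul1n; last by move=> u uD; rewrite /F uD card1.
rewrite (eq_bigr (fun _ => q)); last by move=> u uD; rewrite /F (negbTE uD) card_ord.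
rewrite prod_nat_const -expnD.
congr (_ ^ _).
rewrite addnC -(cardC D); congr (_ + _); apply: eq_card => u; by rewrite !inE.
Qed.

From mathcomp Require unstable.
From mathcomp Require Import ring lra.

Definition bad (V : finType) (q : nat) (P : {set V} -> {set 'I_q}) (e : {set V}) :
  {set {ffun V -> 'I_q}} := [set s : {ffun V -> 'I_q} | (#|s @: e :|: P e| <= 1)%N].
Definition av (V : finType) (q : nat) (P : {set V} -> {set 'I_q}) (S : {set {set V}}) :
  {set {ffun V -> 'I_q}} := [set s : {ffun V -> 'I_q} | [forall f in S, (1 < #|s @: f :|: P f|)%N]].

Lemma av_add (V : finType) (q : nat) (P : {set V} -> {set 'I_q}) (f : {set V}) (T : {set {set V}}) :
  av P (f |: T) = av P T :\: bad P f.
Proof.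
apply/setP=> s /=; rewrite !inE; apply/forall_inP/andP.
- move=> h; split; first by rewrite -ltnNge; apply: h; rewrite !inE eqxx.
  by apply/forall_inP => g gT; apply: h; rewrite !inE gT orbT.
- case=> h1 /forall_inP h2 g; rewrite !inE => /orP[/eqP->|]; last exact: h2.
  by rewrite ltnNge.
Qed.

Lemma av_sub (V : finType) (q : nat) (P : {set V} -> {set 'I_q}) (S S' : {set {set V}}) :
  S \subset S' -> av P S' \subset av P S.
Proof.
move=> sS; apply/fintype.subsetP => s; rewrite !inE => /forall_inP h.
by apply/forall_inP => f fS; apply: h; apply: (fintype.subsetP sS).
Qed.

Lemma bad_card (V : finType) (q : nat) (P : {set V} -> {set 'I_q}) (e : {set V}) (k' : nat) :
  (0 < q)%N -> (k' <= #|e|)%N -> (0 < k')%N ->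
  (#|bad P e| * q ^ k'.-1 <= q ^ #|V|)%N.
Proof.
move=> q0 ke k0.
have [u0 ue] : exists u0, u0 \in e by apply/card_gt0P; exact: leq_trans ke.
pose C (c0 : 'I_q) := [set s : {ffun V -> 'I_q} | [forall u in e, s u == (fun _ => c0) u]].
have sub : bad P e \subset \bigcup_(c0 : 'I_q) C c0.
  apply/fintype.subsetP => s; rewrite inE => /card_le1_eqP hs.
  apply/bigcupP; exists (s u0) => //; rewrite inE; apply/forall_inP => u uu.
  apply/eqP; apply: hs; rewrite inE; apply/orP; left; exact: imset_f.
have h1 := unstable.card_big_setU (index_enum 'I_q) predT C.
rewrite -(leq_pmul2r q0).
apply: (@leq_trans ((\sum_(c0 : 'I_q) #|C c0|) * q ^ k'.-1 * q)).
  by rewrite leq_mul2r leq_mul2r (leq_trans (subset_leq_card sub) h1) !orbT.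
rewrite big_distrl big_distrl /=.
apply: (@leq_trans (\sum_(c0 : 'I_q) q ^ #|V|)).
  apply: leq_sum => c0 _; rewrite -(card_fix e (fun _ => c0)) -mulnA leq_mul2l.
  by rewrite -expnSr prednK // leq_pexp2l // orbT.
by rewrite sum_nat_const card_ord mulnC.
Qed.

Lemma A_card (V : finType) (q : nat) (v : V) (c : 'I_q) :
  (#|[set s : {ffun V -> 'I_q} | s v == c]| * q = q ^ #|V|)%N.
Proof.
have := card_fix [set v] (fun _ => c); rewrite cards1 expn1 => <-; congr (_ * _)%N.
apply: eq_card => s; rewrite !inE; apply/eqP/forall_inP => [h u|h].
  by rewrite inE => /eqP->; apply/eqP.
by apply/eqP; apply: h; rewrite inE.
Qed.

Local Open Scope ring_scope.

Lemma card_av_add (R : realType) (V : finType) (q : nat) (P : {set V} -> {set 'I_q})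
   (f : {set V}) (T : {set {set V}}) :
  #|av P (f |: T)|%:R = #|av P T|%:R - #|bad P f :&: av P T|%:R :> R.
Proof.
rewrite av_add finset.setIC; have := cardsID (bad P f) (av P T).
move/(congr1 (fun n : nat => n%:R : R)); rewrite natrD => <-.
by rewrite addrAC subrr add0r.
Qed.

Lemma chain (R : realType) (V : finType) (q : nat) (P : {set V} -> {set 'I_q})
  (E : {set {set V}}) (x : R) (N : nat) :
  0 <= x <= 1 ->
  (forall (T : {set {set V}}) f, T \subset E -> f \in E -> f \notin T -> (#|T| < N)%N ->
      #|bad P f :&: av P T|%:R <= x * #|av P T|%:R) ->
  forall n (S1 S2 : {set {set V}}), #|S1| = n -> S1 \subset E -> S2 \subset E ->
    [disjoint S1 & S2] -> (#|S1 :|: S2| <= N)%N ->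
  (1 - x) ^+ n * #|av P S2|%:R <= #|av P (S1 :|: S2)|%:R.
Proof.
move=> /andP[x0 x1] hk; elim=> [|n IH] S1 S2 cS1 sS1 sS2 dS hN.
  by move/eqP: cS1; rewrite cards_eq0 => /eqP->; rewrite finset.set0U expr0 mul1r.
have : (0 < #|S1|)%N by rewrite cS1.
case/card_gt0P => f fS1.
pose S1' := S1 :\ f.
have cS1' : #|S1'| = n by have := cardsD1 f S1; rewrite fS1 cS1 add1n => -[].
have eqU : S1 :|: S2 = f |: (S1' :|: S2) by rewrite finset.setUA (finset.setD1K fS1).
pose T := S1' :|: S2.
have sS1' : S1' \subset E := fintype.subset_trans (subD1set S1 f) sS1.
have sT : T \subset E by rewrite finset.subUset sS1' sS2.
have fT : f \notin T by rewrite !inE negb_or eqxx /= (disjointFr dS fS1).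
have cT : (#|T| < N)%N by move: hN; rewrite eqU cardsU1 fT.
have dS' : [disjoint S1' & S2] := disjointWl (subD1set S1 f) dS.
have ih := IH S1' S2 cS1' sS1' sS2 dS' (ltnW cT).
have hf := hk T f sT (fintype.subsetP sS1 f fS1) fT cT.
rewrite eqU card_av_add -/T exprS -mulrA.
have x1' : 0 <= 1 - x by rewrite subr_ge0.
apply: le_trans (ler_wpM2l x1' ih) _.
lra.
Qed.

Lemma key (R : realType) (V : finType) (q : nat) (P : {set V} -> {set 'I_q})
  (E : {set {set V}}) (x : R) (n0 : nat) :
  0 <= x <= 1 ->
  (forall e (S2 : {set {set V}}), e \in E -> S2 \subset E ->
     (forall f, f \in S2 -> [disjoint f & e]) ->
     #|bad P e :&: av P S2|%:R <= x * (1 - x) ^+ n0 * #|av P S2|%:R) ->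
  (forall e (S : {set {set V}}), e \in E -> S \subset E -> e \notin S ->
     (#|[set f in S | ~~ [disjoint f & e]]| <= n0)%N) ->
  forall N (S : {set {set V}}) e, (#|S| < N)%N -> S \subset E -> e \in E -> e \notin S ->
     #|bad P e :&: av P S|%:R <= x * #|av P S|%:R.
Proof.
move=> hx hb hdeg; elim=> [//|N IH] S e cS sS eE eS.
pose S1 := [set f in S | ~~ [disjoint f & e]].
pose S2 := [set f in S | [disjoint f & e]].
have eqS : S = S1 :|: S2.
  by apply/setP=> f; rewrite !inE; case: (f \in S); case: [disjoint f & e].
have sS2 : S2 \subset S by apply/fintype.subsetP => f; rewrite inE => /andP[].
have sS1 : S1 \subset S by apply/fintype.subsetP => f; rewrite inE => /andP[].
have hS2 : forall f, f \in S2 -> [disjoint f & e] by move=> f; rewrite inE => /andP[].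
have dS : [disjoint S1 & S2].
  rewrite -setI_eq0; apply/eqP/setP => f; rewrite !inE.
  by case: (f \in S); case: [disjoint f & e].
have h1 := chain hx (fun T f a b c d => IH T f d a b c) (erefl #|S1|) (fintype.subset_trans sS1 sS)
  (fintype.subset_trans sS2 sS) dS.
rewrite -eqS in h1; have {h1} h1 := h1 cS.
have h2 := hb e S2 eE (fintype.subset_trans sS2 sS) hS2.
have h3 := hdeg e S eE sS eS.
have h4 : (#|bad P e :&: av P S| <= #|bad P e :&: av P S2|)%N.
  by apply: subset_leq_card; apply: finset.setIS; apply: av_sub.
case/andP: hx => x0 x1.
have x1' : 0 <= 1 - x by rewrite subr_ge0.
have x1'' : 1 - x <= 1 by rewrite lerBlDr lerDl.
have h5 : (1 - x) ^+ n0 <= (1 - x) ^+ #|S1| := ler_wiXn2l x1' x1'' h3.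
apply: le_trans (_ : x * ((1 - x) ^+ #|S1| * #|av P S2|%:R) <= _); last first.
  by apply: ler_wpM2l.
rewrite mulrA; apply: le_trans (_ : x * (1 - x) ^+ n0 * #|av P S2|%:R <= _).
  by apply: le_trans h2; rewrite ler_nat.
apply: ler_wpM2r; first by rewrite ler0n.
by apply: ler_wpM2l.
Qed.

Lemma deg_bound (V : finType) (E : {set {set V}}) (e : {set V}) (S : {set {set V}}) (k : nat) :
  e \in E -> S \subset E -> e \notin S -> (#|e| <= k)%N ->
  (#|[set f in S | ~~ [disjoint f & e]]| <= k * (maxdeg E).-1)%N.
Proof.
move=> eE sS eS ek.
apply: (leq_trans (subset_leq_card
   (_ : _ \subset \bigcup_(u in e) ([set g in E | u \in g] :\ e)))).
  apply/fintype.subsetP => f; rewrite inE => /andP[fS].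
  rewrite -setI_eq0 => /set0Pn[u]; rewrite inE => /andP[uf ue].
  have fe : f != e by apply: contraNneq eS => <-.
  by apply/bigcupP; exists u => //; rewrite !inE fe (fintype.subsetP sS f fS) uf.
apply: (leq_trans (unstable.card_big_setU _ _ _)).
apply: (@leq_trans (\sum_(u in e) (maxdeg E).-1)).
  apply: leq_sum => u ue.
  have := cardsD1 e [set g in E | u \in g]; rewrite !inE eE ue /= add1n => hc.
  have : (hdeg E u <= maxdeg E)%N := leq_bigmax u.
  by rewrite /hdeg hc /=; case: (maxdeg E) => //.
by rewrite sum_nat_const leq_mul2r ek orbT.
Qed.


Lemma bern (R : realType) (x : R) (n : nat) : 0 <= x <= 1 -> 1 - n%:R * x <= (1 - x) ^+ n.
Proof.
case/andP => x0 x1; elim: n => [|n IH]; first by rewrite mul0r subr0 expr0.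
rewrite exprS -natr1.
have x1' : 0 <= 1 - x by rewrite subr_ge0.
apply: le_trans (ler_wpM2l x1' IH).
have hx2 : 0 <= n%:R * x * x by rewrite -mulrA mulr_ge0 // ?ler0n // mulr_ge0.
rewrite mulrDl mul1r.
have -> : (1 - x) * (1 - n%:R * x) = 1 - x - n%:R * x + n%:R * x * x.
  by ring.
lra.
Qed.

Lemma expbound (R : realType) (x : R) (n : nat) :
  0 <= x -> x < 1 -> n%:R * x <= 1 - x -> expR (-1) <= (1 - x) ^+ n.
Proof.
move=> x0 x1 hn.
have x1' : 0 < 1 - x by rewrite subr_gt0.
pose y := x / (1 - x).
have hy : (1 - x) * y = x by rewrite /y mulrC -mulrA mulVf ?mulr1 // gt_eqF.
have h1 : expR (- y) <= 1 - x.
  have h0 : 1 <= (1 - x) * expR y.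
    apply: le_trans (_ : (1 - x) * (1 + y) <= _); first by rewrite mulrDr mulr1 hy; lra.
    by apply: ler_wpM2l; [lra | exact: expR_ge1Dx].
  by rewrite expRN -div1r ler_pdivrMr ?expR_gt0.
apply: le_trans (_ : expR (- y) ^+ n <= _); last first.
  by apply: lerXn2r => //; rewrite nnegrE ?expR_ge0 //; lra.
rewrite -expRM_natl ler_expR.
have : n%:R * y <= 1.
  by rewrite /y mulrA ler_pdivrMr // mul1r.
rewrite mulrN; lra.
Qed.

Lemma num1 (R : realType) (a b y : R) : 1 - a <= b -> a <= y -> 1 - y <= b.
Proof. move=> h1 h2; lra. Qed.

Lemma num3 (R : realType) (t : R) : 0 < t -> 0 <= 1 + 4 / t.
Proof.
move=> t0; have : 0 <= t^-1 by rewrite invr_ge0; lra.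
move=> h; lra.
Qed.

Lemma num2 (R : realType) (t p : R) : 2 <= t -> 1 - t^-1 <= p -> 1 <= (1 + 4 / t) * p.
Proof.
move=> t2 hp.
have t0 : 0 < t by lra.
have ti : 0 <= t^-1 by rewrite invr_ge0; lra.
have ti2 : t^-1 <= 2^-1 by rewrite lef_pV2 ?posrE //; lra.
apply: le_trans (_ : (1 + 4 / t) * (1 - t^-1) <= _); last first.
  by apply: ler_wpM2l => //; lra.
have -> : (1 + 4 / t) * (1 - t^-1) = 1 + t^-1 * (3 - 4 * t^-1) by ring.
have : 0 <= t^-1 * (3 - 4 * t^-1) by apply: mulr_ge0; lra.
lra.
Qed.

Theorem lemma2p3 (R : realType) (V : finType) (q : nat)
    (E : {set {set V}}) (P : {set V} -> {set 'I_q})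
    (k k' : nat) (t : R) :
  (2 <= k')%N -> (k' <= k)%N ->
  (forall e, e \in E -> (k' <= #|e| <= k)%N) ->
  k%:R <= t ->
  powR (expR 1 * t * (maxdeg E)%:R) (1 / (k'.-1)%:R) <= q%:R ->
  forall (v : V) (c : 'I_q),
    marg_prob R E P v c <= q%:R^-1 * (1 + 4 / t).
Proof.
move=> hk' hkk hE hkt hq v c.
set D := maxdeg E.
have q0 : (0 < q)%N := leq_ltn_trans (leq0n _) (ltn_ord c).
have k2 : (2 <= k)%N := leq_trans hk' hkk.
have t2 : 2 <= t by apply: le_trans hkt; rewrite (ler_nat R 2 k).
have t0 : 0 < t by lra.
set x : R := (t * D%:R)^-1.
have x0 : 0 <= x by rewrite /x invr_ge0 mulr_ge0 // ?ler0n; lra.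
have hDx : D%:R * x <= t^-1.
  case: (posnP D) => [->|D0]; first by rewrite mul0r invr_ge0; lra.
  rewrite /x invfM mulrC -mulrA mulVf ?mulr1 //.
  by rewrite pnatr_eq0 -lt0n.
have x1 : x <= 1.
  case: (posnP D) => [D0|D0]; first by rewrite /x D0 mulr0 invr0; lra.
  rewrite /x invf_le1; last by rewrite mulr_gt0 // ltr0n.
  have : 1 <= D%:R :> R by rewrite ler1n.
  nra.
have hx : 0 <= x <= 1 by rewrite x0 x1.
have hpow : expR 1 * t * D%:R <= q%:R ^+ k'.-1.
  set a := expR 1 * t * D%:R.
  have a0 : 0 <= a by rewrite /a mulr_ge0 ?ler0n // mulr_ge0 ?expR_ge0 //; lra.
  have := lerXn2r k'.-1 _ _ hq.
  rewrite !nnegrE powR_ge0 ler0n => /(_ isT isT).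
  rewrite -powR_mulrn ?powR_ge0 // -powRrM div1r mulVf ?powRr1 //.
  by rewrite pnatr_eq0 -lt0n -ltnS prednK // ltnW.
pose n0 := (k * D.-1)%N.
have hdeg : forall e (S : {set {set V}}), e \in E -> S \subset E -> e \notin S ->
     (#|[set f in S | ~~ [disjoint f & e]]| <= n0)%N.
  move=> e S eE sS eS; apply: deg_bound => //.
  by case/andP: (hE e eE).
have hb : forall e (S2 : {set {set V}}), e \in E -> S2 \subset E ->
     (forall f, f \in S2 -> [disjoint f & e]) ->
     #|bad P e :&: av P S2|%:R <= x * (1 - x) ^+ n0 * #|av P S2|%:R.
  move=> e S2 eE sS2 hd.
  have /andP[ke ek] := hE e eE.
  have [u0 ue] : exists u0, u0 \in e.
    by apply/card_gt0P; apply: leq_trans ke; apply: leq_trans hk'.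
  have D1 : (1 <= D)%N.
    apply: leq_trans (leq_bigmax u0); apply/card_gt0P; exists e; by rewrite inE eE ue.
  have hI := @indep V q e (bad P e) (av P S2).
  have {hI} hI : (#|bad P e :&: av P S2| * q ^ #|V| = #|bad P e| * #|av P S2|)%N.
    rewrite -hI.
    - by rewrite card_ffun card_ord.
    - move=> s s' h; rewrite !inE (eq_in_imset h) //.
    - move=> s s' h; rewrite !inE; apply/forall_inP/forall_inP => H f fS;
      have := H f fS; rewrite (@eq_in_imset _ _ s s') //;
      move=> u uf; apply: h; by rewrite (disjointFr (hd f fS) uf).
  have hbc := bad_card P q0 ke (ltnW hk').
  have hn : (#|bad P e :&: av P S2| * q ^ k'.-1 <= #|av P S2|)%N.
    rewrite -(@leq_pmul2r (q ^ #|V|)) ?expn_gt0 ?q0 //.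
    rewrite mulnAC hI mulnAC [X in (_ <= X)%N]mulnC.
    by rewrite leq_mul2r hbc orbT.
  have hnR : #|bad P e :&: av P S2|%:R * q%:R ^+ k'.-1 <= #|av P S2|%:R :> R.
    by rewrite -natrX -natrM ler_nat.
  have tD : t * D%:R * x = 1 by rewrite /x mulfV // mulf_neq0 ?pnatr_eq0 -?lt0n //; lra.
  have n0x : n0%:R * x <= 1 - x.
    have : (n0 + 1 <= k * D)%N.
      rewrite /n0; case: (D) D1 => [//|m _] /=.
      by rewrite mulnS addnC leq_add2r; case: (k) k2.
    rewrite -(ler_nat R) natrD natrM => h.
    have : n0%:R + 1 <= t * D%:R.
      apply: le_trans h _; apply: ler_wpM2r; first by rewrite ler0n.
      exact: hkt.
    move=> h'; have := ler_wpM2r x0 h'; rewrite tD mulrDl mul1r; lra.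
  have xlt1 : x < 1.
    have : 2 <= t * D%:R.
      apply: le_trans (_ : t * 1 <= _); first by rewrite mulr1.
      by apply: ler_wpM2l; [lra | rewrite ler1n].
    move=> h2; have := ler_wpM2r x0 h2; rewrite tD; lra.
  have he := expbound x0 xlt1 n0x.
  have hab : 0 <= #|bad P e :&: av P S2|%:R :> R by rewrite ler0n.
  have hav : 0 <= #|av P S2|%:R :> R by rewrite ler0n.
  set b := #|bad P e :&: av P S2|%:R in hab hnR *.
  set w := #|av P S2|%:R in hav hnR *.
  have h1 : b * (expR 1 * t * D%:R) <= w.
    by apply: le_trans hnR; apply: ler_wpM2l.
  have h2 : x * expR (-1) * w <= x * (1 - x) ^+ n0 * w.
    by apply: ler_wpM2r => //; apply: ler_wpM2l.
  apply: le_trans h2.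
  have -> : b = x * expR (-1) * (b * (expR 1 * t * D%:R)).
    transitivity (b * ((t * D%:R * x) * (expR 1 * expR (-1)))); last by ring.
    by rewrite tD expRxMexpNx_1 !mulr1.
  by apply: ler_wpM2l => //; rewrite mulr_ge0 ?expR_ge0.
set A := [set s : {ffun V -> 'I_q} | s v == c].
have hprop : proper_cols E P = av P E by apply/setP => s; rewrite !inE /proper_col.
have hsetA : [set sigma in proper_cols E P | sigma v == c] = A :&: av P E.
  by apply/setP => s; rewrite hprop !inE andbC.
rewrite /marg_prob hsetA hprop.
have hkey : forall (S : {set {set V}}) e, S \subset E -> e \in E -> e \notin S ->
    #|bad P e :&: av P S|%:R <= x * #|av P S|%:R :> R.
  by move=> S e; apply: (@key R V q P E x n0 hx hb hdeg #|S|.+1 S e (ltnSn _)).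
pose S1 := [set f in E | v \in f].
pose S2 := [set f in E | v \notin f].
have sS1 : S1 \subset E by apply/fintype.subsetP => f; rewrite inE => /andP[].
have sS2 : S2 \subset E by apply/fintype.subsetP => f; rewrite inE => /andP[].
have dS : [disjoint S1 & S2].
  rewrite -setI_eq0; apply/eqP/setP => f; rewrite !inE.
  by case: (f \in E); case: (v \in f).
have eqE : S1 :|: S2 = E.
  by apply/setP => f; rewrite !inE; case: (f \in E); case: (v \in f).
have hch := @chain R V q P E x #|E| hx (fun T f a b c _ => hkey T f a b c) _ S1 S2 (erefl _) sS1 sS2 dS.
rewrite eqE in hch; have {hch} hch := hch (leqnn _).
have hI := @indep V q [set v] A (av P S2).
have {hI} hI : (#|A :&: av P S2| * q ^ #|V| = #|A| * #|av P S2|)%N.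
  rewrite -hI.
  - by rewrite card_ffun card_ord.
  - by move=> s s' h; rewrite !inE (h v) // inE.
  - move=> s s' h; rewrite !inE; apply/forall_inP/forall_inP => H f fS;
    have := H f fS; move: fS; rewrite inE => /andP[_ vf];
    rewrite (@eq_in_imset _ _ s s') //;
    move=> u uf; apply: h; rewrite inE; apply: contraNneq vf => <-; exact: uf.
have hA := A_card v c.
have hAn : (#|A :&: av P S2| * q = #|av P S2|)%N.
  apply/eqP; rewrite -(@eqn_pmul2r (q ^ #|V|)) ?expn_gt0 ?q0 //.
  by rewrite mulnAC hI -hA mulnAC mulnC.
have hsub : (#|A :&: av P E| <= #|A :&: av P S2|)%N.
  by apply: subset_leq_card; apply: finset.setIS; apply: av_sub.
have hsub2 : (#|A :&: av P E| <= #|av P E|)%N.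
  by apply: subset_leq_card; apply: finset.subsetIr.
have hS1 : (#|S1| <= D)%N := leq_bigmax v.
have hbern := bern #|S1| hx.
have hS1x : #|S1|%:R * x <= t^-1.
  apply: le_trans _ hDx; apply: ler_wpM2r => //; by rewrite ler_nat.
have hp : 1 - t^-1 <= (1 - x) ^+ #|S1| := num1 hbern hS1x.
have h4t : 0 <= 1 + 4 / t := num3 t0.
have hfac : 1 <= (1 + 4 / t) * (1 - x) ^+ #|S1| := num2 t2 hp.
have q0R : 0 < q%:R :> R by rewrite ltr0n.
set a := #|A :&: av P E|%:R : R.
set w2 := #|av P S2|%:R : R.
set wE := #|av P E|%:R : R.
have haq : a * q%:R <= w2.
  rewrite /a /w2 -natrM ler_nat -hAn leq_mul2r hsub orbT //.
have hw2 : 0 <= w2 by rewrite ler0n.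
have hw : w2 <= (1 + 4 / t) * wE.
  apply: le_trans (_ : (1 + 4 / t) * ((1 - x) ^+ #|S1| * w2) <= _); last first.
    by apply: ler_wpM2l.
  by rewrite mulrA; rewrite -[X in X <= _]mul1r; apply: ler_wpM2r.
have [wE0|wE0] := eqVneq wE 0.
  have : a <= wE by rewrite /a /wE ler_nat.
  rewrite wE0 invr0 mulr0 => _; apply: mulr_ge0; first by rewrite invr_ge0 ler0n.
  exact: h4t.
have wEp : 0 < wE by rewrite lt_def wE0 ler0n.
rewrite ler_pdivrMr //.
apply: le_trans (_ : q%:R^-1 * w2 <= _); last first.
  by rewrite -mulrA; apply: ler_wpM2l => //; rewrite invr_ge0 ler0n.
rewrite -(@ler_pM2r _ q%:R) // mulrAC mulVf ?mul1r //; last by rewrite gt_eqF.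
Qed.
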